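(* Assume $n>3t+2d$. In any execution of Algorithm 1, if a correct process mbrb-delivers an app-message $m$ from $p_j$ with sequence number $sn$, then at least $\ell=c-d$ correct processes mbrb-deliver $m$ from $p_j$ with sequence number $sn$.
   Context: System model. There are $n$ asynchronous processes $p_1,\dots,p_n$ with distinct known identities. Up to $t$ are Byzantine (arbitrary behavior); the rest are correct; $c$ is the number of correct processes in the execution, $n-t\le c\le n$. The network is fully connected, asynchronous, never corrupts/duplicates/creates messages; ''broadcast $M$'' sends $M$ to all $n$ processes; a message adversary may suppress, per broadcast by a correct process, up to $d$ ($0\le d<c$) copies addressed to correct processes, all other copies among correct processes being eventually received. Signatures are unforgeable and public keys are known. Algorithm 1 (code for $p_i$). Each process stores, for each triplet $(m,sn,j)$, a set of saved valid signatures of that triplet, at most one per signer. On $\mathrm{mbrb\_broadcast}(m,sn)$: $p_i$ saves its own signature of $(m,sn,i)$ and broadcasts $\mathrm{BUNDLE}(m,sn,i,S)$, $S$ the saved signatures for $(m,sn,i)$. On receiving $\mathrm{BUNDLE}(m,sn,j,sigs)$: if $p_i$ has not already mbrb-delivered some $(-,sn,j)$ and $sigs$ contains a valid signature of $(m,sn,j)$ by $p_j$, then: (1) save all new valid signatures of $(m,sn,j)$ in $sigs$; (2) if $p_i$ has not yet signed any $(-,sn,j)$, save its own signature of $(m,sn,j)$ and broadcast $\mathrm{BUNDLE}(m,sn,j,\text{all saved signatures for }(m,sn,j))$; (3) if strictly more than $\frac{n+t}{2}$ signatures for $(m,sn,j)$ are saved, broadcast $\mathrm{BUNDLE}(m,sn,j,\text{all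 saved signatures})$ and mbrb-deliver $(m,sn,j)$. *)

(* Defs.v *)
From mathcomp Require Import all_boot.
Set Implicit Arguments.
Unset Strict Implicit.
Unset Printing Implicit Defensive.

Section MBRB.
Variable M : eqType.     (* application messages *)
Variable n : nat.

(* a triplet (m, sn, j) *)
Definition triple := (M * nat * 'I_n)%type.
(* A signature is modelled symbolically: (signer, signed triplet).
   A signature g is a valid signature of x by k iff g = (k, x). *)
Definition sig := ('I_n * triple)%type.

Inductive msg := BUNDLE (m : M) (sn : nat) (j : 'I_n) (sigs : seq sig).

Definition bsigs (b : msg) : seq sig := let: BUNDLE _ _ _ s := b in s.

Record lstate := Lstate {
  saved : seq sig;          (* saved valid signatures (at most one per signer and triplet) *)
  signed : seq triple;
  delivered : seq triple
}.

Definition init_state : lstate := Lstate [::] [::] [::].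

Definition sigs_for (s : seq sig) (x : triple) : seq sig := [seq g <- s | g.2 == x].

Definition same_slot (sn : nat) (j : 'I_n) (y : triple) : bool :=
  (y.1.2 == sn) && (y.2 == j).

Definition add_sig (s : seq sig) (g : sig) : seq sig :=
  if g \in s then s else rcons s g.

(* handler of mbrb_broadcast(m, sn) at p_i: new state, broadcast messages *)
Definition on_invoke (i : 'I_n) (st : lstate) (m : M) (sn : nat) : lstate * seq msg :=
  let x : triple := (m, sn, i) in
  let sv := add_sig (saved st) (i, x) in
  (Lstate sv (rcons (signed st) x) (delivered st), [:: BUNDLE m sn i (sigs_for sv x)]).

Variable t : nat.

Definition on_receive (i : 'I_n) (st : lstate) (b : msg) : lstate * seq msg :=
  let: BUNDLE m sn j sigs := b in
  let x : triple := (m, sn, j) in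
  if ~~ has (same_slot sn j) (delivered st) && ((j, x) \in sigs) then
    (* (1) save all new valid signatures of x *)
    let sv1 := saved st ++ undup [seq g <- sigs | (g.2 == x) && (g \notin saved st)] in
    (* (2) sign and forward if not yet signed some (-, sn, j) *)
    let '(sv2, sg2, out2) :=
      if ~~ has (same_slot sn j) (signed st) then
        let sv2 := add_sig sv1 (i, x) in
        (sv2, rcons (signed st) x, [:: BUNDLE m sn j (sigs_for sv2 x)])
      else (sv1, signed st, [::]) in
    (* (3) strictly more than (n+t)/2 signatures: broadcast and deliver *)
    if n + t < (size (sigs_for sv2 x)) * 2 then
      (Lstate sv2 sg2 (rcons (delivered st) x),
       out2 ++ [:: BUNDLE m sn j (sigs_for sv2 x)])
    else (Lstate sv2 sg2 (delivered st), out2)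
  else (st, [::]).

(* Global events of an execution (one per time step). *)
Inductive event :=
| Skip
| Invoke (i : 'I_n) (m : M) (sn : nat)
| ByzSend (b dest : 'I_n) (mm : msg)
| Recv (i : 'I_n) (tau k : nat).                     (* p_i receives its copy of the k-th
                                                        message sent at time tau *)

Variable C : {set 'I_n}.      (* correct processes *)
Variable ev : nat -> event.

(* content of the copy addressed to dest of the k-th message sent at time tau0,
   given the broadcasts outs of the correct steps so far *)
Definition copy_msg (outs : seq (seq msg)) (tau0 k : nat) (dest : 'I_n) : option msg :=
  if tau0 < size outs then
    match ev tau0 with
    | ByzSend _ d0 mm => if (k == 0) && (d0 == dest) then Some mm else None
    | _ => onth (nth [::] outs tau0) k
    end
  else None.

Definition upd (st : 'I_n -> lstate) (i : 'I_n) (s : lstate) : 'I_n -> lstate :=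
  fun p => if p == i then s else st p.

(* run tau = (messages broadcast at steps 0..tau-1, local states at time tau) *)
Fixpoint run (tau : nat) : seq (seq msg) * ('I_n -> lstate) :=
  match tau with
  | 0 => ([::], fun _ => init_state)
  | tau'.+1 =>
    let: (outs, st) := run tau' in
    match ev tau' with
    | Invoke i m sn =>
        if i \in C then
          let: (s', o) := on_invoke i (st i) m sn in (rcons outs o, upd st i s')
        else (rcons outs [::], st)
    | Recv i tau0 k =>
        match copy_msg outs tau0 k i with
        | Some mm =>
            if i \in C then
              let: (s', o) := on_receive i (st i) mm in (rcons outs o, upd st i s')
            else (rcons outs [::], st)
        | None => (rcons outs [::], st)
        end
    | _ => (rcons outs [::], st)
    end
  end.

Definition stateAt (tau : nat) (i : 'I_n) : lstate := (run tau).2 i.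
(* messages broadcast (by a correct process) at step tau *)
Definition outsAt (tau : nat) : seq msg := nth [::] (run tau.+1).1 tau.

Definition mbrb_delivers (i : 'I_n) (x : triple) : Prop :=
  exists tau, x \in delivered (stateAt tau i).

Variable d : nat.

Definition valid_exec : Prop :=
  [/\
      #|~: C| <= t /\ d < #|C|,
      (* Byzantine sends: only by Byzantine processes; unforgeability: a signature
         by a correct p_k of x can only be used if p_k signed x earlier *)
      (forall tau b dest mm, ev tau = ByzSend b dest mm ->
         b \notin C /\
         forall k x, (k, x) \in bsigs mm -> k \in C -> x \in signed (stateAt tau k)),
      (forall tau i m sn, ev tau = Invoke i m sn ->
         i \in C /\ forall tau' m', ev tau' = Invoke i m' sn -> tau' = tau),
      (forall tau i tau0 k, ev tau = Recv i tau0 k ->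
         [/\ i \in C, tau0 < tau, copy_msg (run tau).1 tau0 k i <> None &
             forall tau', ev tau' = Recv i tau0 k -> tau' = tau]) &
      (* message adversary: for each broadcast by a correct process, at most d
         copies to correct processes are suppressed, all others are received *)
      (forall tau0 k, k < size (outsAt tau0) ->
         exists D : {set 'I_n}, #|D| <= d /\
           forall i, i \in C -> i \notin D -> exists tau, ev tau = Recv i tau0 k)].

End MBRB.

(* Main.v *)
Require Import Defs.
From mathcomp Require Import all_boot zify.
Set Implicit Arguments.
Unset Strict Implicit.
Unset Printing Implicit Defensive.
Set Bullet Behavior "Strict Subproofs".

Section Loc.
Variables (M : eqType) (n t : nat).

Lemma mem_add_sig (s : seq (sig M n)) g x : (x \in add_sig s g) = (x == g) || (x \in s).
Proof. rewrite /add_sig; case: ifP => H; last by rewrite mem_rcons in_cons.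
by case: eqP => // ->. Qed.

Lemma add_sig_cat (s : seq (sig M n)) g : exists e, add_sig s g = s ++ e.
Proof. rewrite /add_sig; case: ifP => _; [exists [::]; by rewrite cats0 | exists [:: g]; by rewrite cats1]. Qed.

Lemma add_sig_uniq (s : seq (sig M n)) g : uniq s -> uniq (add_sig s g).
Proof. rewrite /add_sig; case: ifP => H // u; by rewrite rcons_uniq H. Qed.

Lemma recv_props i (s : lstate M n) (mm : msg M n) :
 let s' := (on_receive t i s mm).1 in let o := (on_receive t i s mm).2 in
 [/\ (exists e, saved s' = saved s ++ e),
     {subset delivered s <= delivered s'},
     (uniq (saved s) -> uniq (saved s')),
     (forall g, g \in saved s' -> (g \in saved s) || (g \in bsigs mm) || ((g.1 == i) && (g.2 \in signed s')))
   & [/\ (signed s' = signed s \/ exists y, [/\ signed s' = rcons (signed s) y,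
          ~~ has (same_slot y.1.2 y.2) (signed s) & (y.2, y) \in bsigs mm]),
     (forall x, x \in delivered s' -> x \in delivered s \/ n + t < size (sigs_for (saved s') x) * 2)
   & all (fun b => all (fun g => g \in saved s') (bsigs b)) o]].
Proof.
case: mm => m sn j sigs /=.
case: ifP => [/andP[Hnd Hj]|_]; last first.
  split => //; last split => //; [by exists [::]; rewrite cats0 | by move=> g ->| by left | by left].
set x := (m, sn, j).
set sv1 := saved s ++ _.
have sv1c : exists e, sv1 = saved s ++ e by eexists.
have sv1u : uniq (saved s) -> uniq sv1.
  move=> u; rewrite cat_uniq u undup_uniq andbT /=; apply/hasPn => g.
  by rewrite mem_undup mem_filter => /andP[/andP[_ ->]].
have sv1m : forall g, g \in sv1 -> (g \in saved s) || (g \in sigs).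
  by move=> g; rewrite mem_cat mem_undup mem_filter => /orP[->|/andP[_ ->]]; rewrite ?orbT.
case: ifP => Hns /=.
- set sv2 := add_sig sv1 (i, x).
  have sv2c : exists e, sv2 = saved s ++ e.
    case: (add_sig_cat sv1 (i, x)) => e E; rewrite /sv2 E; case: sv1c => e' ->; exists (e' ++ e); by rewrite catA.
  have sv2u : uniq (saved s) -> uniq sv2 by move=> u; apply: add_sig_uniq; exact: sv1u.
  have sv2m : forall g, g \in sv2 -> (g \in saved s) || (g \in sigs) || ((g.1 == i) && (g.2 \in rcons (signed s) x)).
    move=> g; rewrite mem_add_sig => /orP[/eqP->|/sv1m /orP[->|->]]; rewrite ?orbT //.
    by rewrite /= eqxx mem_rcons mem_head !orbT.
  have allsf : forall (sv : seq (sig M n)) (y : triple M n), all (fun g => g \in sv) (sigs_for sv y).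
    by move=> sv y; apply/allP => g; rewrite mem_filter => /andP[].
  case: ifP => Hq /=; (split => //; last split => //); try (by move=> y Hy; rewrite mem_rcons in_cons Hy orbT); try (by right; exists x; split); try (by left); try (by move=> y; rewrite mem_rcons in_cons => /orP[/eqP->|->]; [right|left]); try (by move=> y ->; left); try (by move=> y Hy); try (by rewrite /= ?allsf); try (by move=> g /sv1m /orP[->|->]; rewrite ?orbT).
- have allsf : forall (sv : seq (sig M n)) (y : triple M n), all (fun g => g \in sv) (sigs_for sv y).
    by move=> sv y; apply/allP => g; rewrite mem_filter => /andP[].
  case: ifP => Hq /=; (split => //; last split => //); try (by move=> y Hy; rewrite mem_rcons in_cons Hy orbT); try (by right; exists x; split); try (by left); try (by move=> y; rewrite mem_rcons in_cons => /orP[/eqP->|->]; [right|left]); try (by move=> y ->; left); try (by move=> y Hy); try (by rewrite /= ?allsf); try (by move=> g /sv1m /orP[->|->]; rewrite ?orbT).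
Qed.


Lemma inv_props i (s : lstate M n) m sn :
  let s' := (on_invoke i s m sn).1 in let o := (on_invoke i s m sn).2 in
  [/\ (exists e, saved s' = saved s ++ e), delivered s' = delivered s,
      (uniq (saved s) -> uniq (saved s')),
      (forall g, g \in saved s' -> (g \in saved s) || ((g.1 == i) && (g.2 \in signed s')))
    & [/\ signed s' = rcons (signed s) (m, sn, i)
        & all (fun b => all (fun g => g \in saved s') (bsigs b)) o]].
Proof.
rewrite /=; split => //.
- exact: add_sig_cat.
- exact: add_sig_uniq.
- move=> g; rewrite mem_add_sig => /orP[/eqP->|->] //.
  by rewrite /= eqxx mem_rcons mem_head orbT.
- split => //; rewrite /= andbT; apply/allP => g; by rewrite mem_filter => /andP[_ ->].
Qed.

Lemma sigs_for_sub (s1 s2 : seq (sig M n)) x : {subset s1 <= s2} -> {subset sigs_for s1 x <= sigs_for s2 x}.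
Proof. move=> H g; rewrite !mem_filter => /andP[-> /H]; by []. Qed.

Lemma recv_core i (s : lstate M n) m sn j sigs :
  let x := (m, sn, j) in
  (j, x) \in sigs -> ~~ has (same_slot sn j) (delivered s) ->
  exists sv2, [/\ saved (on_receive t i s (BUNDLE m sn j sigs)).1 = sv2,
     {subset sigs_for sigs x <= sigs_for sv2 x},
     (forall y, y \in delivered (on_receive t i s (BUNDLE m sn j sigs)).1 ->
        y \in delivered s \/ (y = x /\ n + t < size (sigs_for sv2 x) * 2)) &
     (n + t < size (sigs_for sv2 x) * 2 ->
       x \in delivered (on_receive t i s (BUNDLE m sn j sigs)).1 /\
       exists k, onth (on_receive t i s (BUNDLE m sn j sigs)).2 k = Some (BUNDLE m sn j (sigs_for sv2 x)))].
Proof.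
move=> x Hj Hnd /=; rewrite Hj Hnd /=.
set sv1 := saved s ++ _.
have H1 : {subset sigs_for sigs x <= sigs_for sv1 x}.
  move=> g; rewrite !mem_filter => /andP[gx gs]; rewrite gx mem_cat mem_undup mem_filter gx gs /=.
  by case: (g \in saved s).
case: ifP => Hns /=.
- exists (add_sig sv1 (i, x)); case: ifP => Hq /=; split => //; try (by move=> g /H1; apply: sigs_for_sub => y; rewrite mem_add_sig => ->; rewrite orbT); try (by move=> _; split; [rewrite mem_rcons mem_head | exists 0]); try (by move=> y; rewrite mem_rcons in_cons => /orP[/eqP->|->]; [right|left]); try (by move=> y ->; left).
- exists sv1; case: ifP => Hq /=; split => //; try (by move=> g /H1; apply: sigs_for_sub => y; rewrite mem_add_sig => ->; rewrite orbT); try (by move=> _; split; [rewrite mem_rcons mem_head | exists 0]); try (by move=> y; rewrite mem_rcons in_cons => /orP[/eqP->|->]; [right|left]); try (by move=> y ->; left).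
Qed.

End Loc.

Section Pf.
Variables (M : eqType) (n t d : nat) (C : {set 'I_n}) (ev : nat -> event M n).

Notation RUN := (run t C ev).
Notation ST := (stateAt t C ev).

Lemma run_S tau : RUN tau.+1 =
  let: (outs, st) := RUN tau in
    match ev tau with
    | Invoke i m sn =>
        if i \in C then
          let: (s', o) := on_invoke i (st i) m sn in (rcons outs o, upd st i s')
        else (rcons outs [::], st)
    | Recv i tau0 k =>
        match copy_msg ev outs tau0 k i with
        | Some mm =>
            if i \in C then
              let: (s', o) := on_receive t i (st i) mm in (rcons outs o, upd st i s')
            else (rcons outs [::], st)
        | None => (rcons outs [::], st)
        end
    | _ => (rcons outs [::], st)
    end.
Proof. by []. Qed.

Lemma stepP tau :
  let outs := (RUN tau).1 in let st := (RUN tau).2 in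
  [\/ RUN tau.+1 = (rcons outs [::], st),
      exists i m sn, [/\ ev tau = Invoke i m sn, i \in C &
         RUN tau.+1 = (rcons outs (on_invoke i (st i) m sn).2, upd st i (on_invoke i (st i) m sn).1)]
    | exists i tau0 k mm, [/\ ev tau = Recv M i tau0 k, copy_msg ev outs tau0 k i = Some mm, i \in C &
         RUN tau.+1 = (rcons outs (on_receive t i (st i) mm).2, upd st i (on_receive t i (st i) mm).1)]].
Proof.
rewrite run_S /=; case: (RUN tau) => outs st /=.
case E: (ev tau) => [|i m sn|b dd mm|i tau0 k]; try by constructor 1.
- case: ifP => Hi; last by constructor 1.
  constructor 2; exists i, m, sn; split => //; by case: on_invoke.
- case Ec: copy_msg => [mm|]; last by constructor 1.
  case: ifP => Hi; last by constructor 1.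
  constructor 3; exists i, tau0, k, mm; split => //; by case: on_receive.
Qed.

Lemma size_outs tau : size (RUN tau).1 = tau.
Proof.
elim: tau => [//|tau IH]; case: (stepP tau) => [->|[i [m [sn [_ _ ->]]]]|[i [tau0 [k [mm [_ _ _ ->]]]]]];
by rewrite size_rcons IH.
Qed.

Lemma outs_S tau : exists o, (RUN tau.+1).1 = rcons (RUN tau).1 o.
Proof.
case: (stepP tau) => [->|[i [m [sn [_ _ ->]]]]|[i [tau0 [k [mm [_ _ _ ->]]]]]]; eexists; reflexivity.
Qed.

Lemma nth_outs tau0 tau : tau0 < tau -> nth [::] (RUN tau).1 tau0 = outsAt t C ev tau0.
Proof.
elim: tau => [//|tau IH]; rewrite ltnS leq_eqVlt => /orP[/eqP->|lt].
  by [].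
case: (outs_S tau) => o ->; rewrite nth_rcons size_outs lt; exact: IH.
Qed.


Definition mono (s s' : lstate M n) :=
  [/\ exists e, saved s' = saved s ++ e, {subset signed s <= signed s'} &
      {subset delivered s <= delivered s'}].

Lemma mono_refl s : mono s s.
Proof. by split => //; exists [::]; rewrite cats0. Qed.

Lemma mono_trans s1 s2 s3 : mono s1 s2 -> mono s2 s3 -> mono s1 s3.
Proof.
case=> [[e1 E1] S1 D1] [[e2 E2] S2 D2]; split.
- by exists (e1 ++ e2); rewrite E2 E1 catA.
- by move=> y /S1 /S2.
- by move=> y /D1 /D2.
Qed.

Lemma mono_upd (st : 'I_n -> lstate M n) i s' q : mono (st i) s' -> mono (st q) (upd st i s' q).
Proof. move=> H; rewrite /upd; case: eqP => [->|_] //; exact: mono_refl. Qed.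

Lemma mono_step tau p : mono (ST tau p) (ST tau.+1 p).
Proof.
rewrite /stateAt; case: (stepP tau) => [->|[i [m [sn [_ _ ->]]]]|[i [tau0 [k [mm [_ _ _ ->]]]]]] /=.
- exact: mono_refl.
- apply: mono_upd; case: (inv_props i ((RUN tau).2 i) m sn) => E D _ _ [S _]; split => //.
  by move=> y Hy /=; rewrite mem_rcons in_cons Hy orbT.
- apply: mono_upd; case: (recv_props t i ((RUN tau).2 i) mm) => E D _ _ [S _ _]; split => //.
  case: S => [->|[y [-> _ _]]] // z Hz; by rewrite mem_rcons in_cons Hz orbT.
Qed.

Lemma mono_le tau tau' p : tau <= tau' -> mono (ST tau p) (ST tau' p).
Proof.
elim: tau' => [|tau' IH]; first by rewrite leqn0 => /eqP->; exact: mono_refl.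
rewrite leq_eqVlt => /orP[/eqP->|]; first exact: mono_refl.
rewrite ltnS => /IH H; apply: mono_trans H (mono_step _ _).
Qed.

Lemma size_sigs_for_cat (s e : seq (sig M n)) x : size (sigs_for s x) <= size (sigs_for (s ++ e) x).
Proof. by rewrite /sigs_for filter_cat size_cat leq_addr. Qed.

Definition slot_inj (S : seq (triple M n)) :=
  forall y y', y \in S -> y' \in S -> same_slot y.1.2 y.2 y' -> y = y'.

Lemma same_slot_sym (y y' : triple M n) : same_slot y.1.2 y.2 y' = same_slot y'.1.2 y'.2 y.
Proof. rewrite /same_slot; by rewrite (eq_sym y'.1.2) (eq_sym y'.2). Qed.

Lemma slot_inj_rcons S y : slot_inj S -> ~~ has (same_slot y.1.2 y.2) S -> slot_inj (rcons S y).
Proof.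
move=> H Hn y1 y2; rewrite !mem_rcons !in_cons => /orP[/eqP->|h1] /orP[/eqP->|h2] hs //.
- by case/negP: Hn; apply/hasP; exists y2.
- by case/negP: Hn; apply/hasP; exists y1; rewrite // same_slot_sym.
- exact: H.
Qed.

Definition Inv tau :=
 (forall p, let s := ST tau p in
   [/\ uniq (saved s),
       (forall g, g \in saved s -> g.1 \in C -> g.2 \in signed (ST tau g.1)),
       slot_inj (signed s),
       (forall y, y \in signed s -> y.2 = p -> exists2 tau', tau' < tau & ev tau' = Invoke y.2 y.1.1 y.1.2)
     & (forall x, x \in delivered s -> n + t < size (sigs_for (saved s) x) * 2)])
 /\ (forall tau0 k mm, tau0 < tau -> onth (nth [::] (RUN tau).1 tau0) k = Some mm ->
       forall g, g \in bsigs mm -> g.1 \in C -> g.2 \in signed (ST tau g.1)).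

Lemma Inv0 : Inv 0.
Proof. split => // p; split => //. Qed.

Lemma Inv_gen tau o i s' :
 Inv tau -> let st := (RUN tau).2 in
 RUN tau.+1 = (rcons (RUN tau).1 o, upd st i s') ->
 mono (st i) s' -> uniq (saved s') ->
 (forall g, g \in saved s' -> g.1 \in C -> g.2 \in signed (upd st i s' g.1)) ->
 slot_inj (signed s') ->
 (forall y, y \in signed s' -> y.2 = i -> exists2 tau', tau' < tau.+1 & ev tau' = Invoke y.2 y.1.1 y.1.2) ->
 (forall x, x \in delivered s' -> n + t < size (sigs_for (saved s') x) * 2) ->
 all (fun b => all (fun g => g \in saved s') (bsigs b)) o ->
 Inv tau.+1.
Proof.
move=> [I1 I2] st E Hm c2 c3 c4 c5 c6 c7.
have Hs : forall q, {subset signed (st q) <= signed (upd st i s' q)}.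
  by move=> q; case: (mono_upd q Hm).
split.
- move=> p; rewrite /stateAt E /=.
  have [->|ne] := eqVneq p i.
    have -> : upd st i s' i = s' by rewrite /upd eqxx.
    by split.
  have -> : upd st i s' p = st p by rewrite /upd (negbTE ne).
  case: (I1 p); rewrite /stateAt -/st => u1 u2 u3 u4 u5; split => //.
  + by move=> g /u2 H /H /Hs.
  + by move=> y /u4 H /H [tau' lt ev']; exists tau' => //; apply: ltnW.
- move=> tau0 k mm; rewrite ltnS leq_eqVlt /stateAt E /= nth_rcons size_outs.
  case/orP => [/eqP->|lt].
    rewrite ltnn eqxx => Hk g Hg; apply: c3.
    have Hsz : k < size o by rewrite -onthTE Hk.
    move/(all_nthP mm): c7 => /(_ k Hsz); rewrite (onth_nth mm _ _ _ Hk) => /allP /(_ g Hg); exact.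
  rewrite lt => Hk g Hg Hc; apply: Hs; exact: (I2 tau0 k mm lt Hk g Hg Hc).
Qed.
Lemma recv_ok tau i tau0 k mm : valid_exec t C ev d -> Inv tau ->
  copy_msg ev (RUN tau).1 tau0 k i = Some mm ->
  forall g, g \in bsigs mm -> g.1 \in C -> g.2 \in signed (ST tau g.1).
Proof.
case=> _ Hbyz _ _ _ [_ I2]; rewrite /copy_msg size_outs; case: ifP => // lt.
case E: (ev tau0) => [|i0 m sn|b dd mm0|i0 a b]; try by move=> Hk; exact: (I2 _ _ _ lt Hk).
case: ifP => // _ [<-] [k' x] Hg Hc.
case: (Hbyz _ _ _ _ E) => _ /(_ k' x Hg Hc).
by case: (mono_le k' (ltnW lt)) => _ S _ /S.
Qed.

Lemma Inv_step tau : valid_exec t C ev d -> Inv tau -> Inv tau.+1.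
Proof.
move=> Hv I; have Hv' := Hv; case: Hv' => _ _ Hinv _ _.
case: (I) => I1 I2.
case: (stepP tau) => [E|[i [m [sn [Ev Hi E]]]]|[i [tau0 [k [mm [Ev Hc Hi E]]]]]].
- split.
  + move=> p; rewrite /stateAt E /=; case: (I1 p) => /= u1 u2 u3 u4 u5; split => //.
    by move=> y /u4 H /H [tau' lt ev']; exists tau' => //; apply: ltnW.
  + move=> tau0 k mm; rewrite ltnS leq_eqVlt /stateAt E /= nth_rcons size_outs.
    case/orP => [/eqP->|lt]; first by rewrite ltnn eqxx /= onth0n.
    rewrite lt; exact: I2.
- set s := (RUN tau).2 i.
  case: (inv_props i s m sn) => Es Ed Eu Eg [Esg Eo].
  case: (I1 i) => /= u1 u2 u3 u4 u5.
  have Hm : mono s (on_invoke i s m sn).1.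
    split; [exact: Es | by move=> y Hy /=; rewrite mem_rcons in_cons Hy orbT | by move=> y Hy /=].
  apply: (Inv_gen I E) => //.
  + exact: Eu.
  + move=> g /Eg /orP[Hg Hgc|/andP[/eqP Hg1 Hg2] _].
      by case: (mono_upd g.1 (st:=(RUN tau).2) Hm) => _ S _; apply: S; exact: u2.
    by rewrite Hg1 /upd eqxx.
  + rewrite Esg; apply: slot_inj_rcons => //; apply/negP => /hasP [y Hy].
    rewrite /same_slot /= => /andP[/eqP Hsn /eqP Hj].
    case: (u4 y Hy Hj) => tau' lt; rewrite Hj Hsn => Ev'.
    by case: (Hinv _ _ _ _ Ev) => _ /(_ _ _ Ev') Heq; move: lt; rewrite Heq ltnn.
  + move=> y; rewrite Esg mem_rcons in_cons => /orP[/eqP-> _|Hy Hyi].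
      by exists tau.
    by case: (u4 y Hy Hyi) => tau' lt ev'; exists tau' => //; apply: ltnW.
  + move=> x; rewrite Ed => /u5; case: Es => e ->; move/leq_trans; apply.
    by rewrite leq_mul2r size_sigs_for_cat orbT.
- set s := (RUN tau).2 i.
  have Rok := recv_ok Hv I Hc.
  case: (recv_props t i s mm) => Es Ed Eu Eg [Esg Edl Eo].
  case: (I1 i) => /= u1 u2 u3 u4 u5.
  set s' := (on_receive t i s mm).1.
  have Hm : mono s s'.
    split => //; case: Esg => [->|[y [-> _ _]]] // z Hz; by rewrite mem_rcons in_cons Hz orbT.
  apply: (Inv_gen I E) => //.
  + exact: Eu.
  + move=> g /Eg /orP[/orP[Hg|Hg] Hgc|/andP[/eqP Hg1 Hg2] _].
    * by case: (mono_upd g.1 (st:=(RUN tau).2) Hm) => _ S _; apply: S; exact: u2.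
    * by case: (mono_upd g.1 (st:=(RUN tau).2) Hm) => _ S _; apply: S; exact: Rok.
    * by rewrite Hg1 /upd eqxx.
  + case: Esg => [->|[y [-> Hn _]]] //; exact: slot_inj_rcons.
  + case: Esg => [->|[y [Ey Hn Hyb]]].
      by move=> y Hy Hyi; case: (u4 y Hy Hyi) => tau' lt ev'; exists tau' => //; apply: ltnW.
    move=> z; rewrite Ey mem_rcons in_cons => /orP[/eqP->|Hz Hzi]; last first.
      by case: (u4 z Hz Hzi) => tau' lt ev'; exists tau' => //; apply: ltnW.
    move=> Hyi; have := Rok _ Hyb; rewrite /= Hyi => /(_ Hi) Hys.
    exfalso; move/negP: Hn; apply; apply/hasP; exists y => //; by rewrite /same_slot !eqxx.
  + move=> x /Edl [/u5|//]; case: Es => e ->; move/leq_trans; apply.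
    by rewrite leq_mul2r size_sigs_for_cat orbT.
Qed.

Lemma Inv_all tau : valid_exec t C ev d -> Inv tau.
Proof. move=> Hv; elim: tau => [|tau IH]; [exact: Inv0 | exact: Inv_step]. Qed.
Lemma card_signers (s : seq (sig M n)) x : uniq s ->
  #|[set k | (k, x) \in s]| = size (sigs_for s x).
Proof.
move=> u; have u1 : uniq (sigs_for s x) by apply: filter_uniq.
have u2 : uniq (map fst (sigs_for s x)).
  rewrite map_inj_in_uniq // => [[k1 x1] [k2 x2]]; rewrite !mem_filter /= => /andP[/eqP-> _] /andP[/eqP-> _] /= ->.
  by [].
rewrite -(size_map fst) -(card_uniqP u2); apply: eq_card => k.
rewrite inE; apply/idP/mapP => [H|[[k' x'] Hg /= ->]].
- by exists (k, x); rewrite // mem_filter /= eqxx.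
- by move: Hg; rewrite mem_filter /= => /andP[/eqP-> ->].
Qed.

Lemma quorum T1 T2 p1 p2 x x' : valid_exec t C ev d ->
  same_slot x.1.2 x.2 x' ->
  n + t < size (sigs_for (saved (ST T1 p1)) x) * 2 ->
  n + t < size (sigs_for (saved (ST T2 p2)) x') * 2 -> x = x'.
Proof.
move=> Hv Hs H1 H2.
have Hv' := Hv; case: Hv' => [[Hct _] _ _ _ _].
case: (Inv_all T1 Hv) => I1 _; case: (Inv_all T2 Hv) => I2 _.
case: (I1 p1) => /= u1 a1 _ _ _; case: (I2 p2) => /= u2 a2 _ _ _.
set A1 := [set k | (k, x) \in saved (ST T1 p1)].
set A2 := [set k | (k, x') \in saved (ST T2 p2)].
have c1 := card_signers x u1; have c2 := card_signers x' u2.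
have cU := cardsUI A1 A2.
have cmax : #|A1 :|: A2| <= n by have := max_card (A1 :|: A2); rewrite card_ord.
have : ~~ ((A1 :&: A2) \subset ~: C).
  apply/negP => /subset_leq_card; rewrite -/A1 -/A2 in c1 c2.
  move: Hct; rewrite cardsCs setCK; lia.
case/subsetPn => k; rewrite !inE negbK => /andP[k1 k2] kC.
have sx := a1 _ k1 kC; have sx' := a2 _ k2 kC; rewrite /= in sx sx'.
case: (Inv_all (maxn T1 T2) Hv) => I _; case: (I k) => /= _ _ sl _ _.
apply: sl => //.
- by case: (mono_le k (leq_maxl T1 T2)) => _ S _; apply: S.
- by case: (mono_le k (leq_maxr T1 T2)) => _ S _; apply: S.
Qed.

Lemma first_del p x tau : x \in delivered (ST tau p) ->
  exists tau1, x \notin delivered (ST tau1 p) /\ x \in delivered (ST tau1.+1 p).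
Proof.
elim: tau => [//|tau IH] H.
case H0: (x \in delivered (ST tau p)); first exact: IH.
by exists tau; rewrite H0.
Qed.

Lemma del_step p x tau1 : x \notin delivered (ST tau1 p) -> x \in delivered (ST tau1.+1 p) ->
  [/\ p \in C, (x.2, x) \in saved (ST tau1.+1 p),
      exists k, onth (outsAt t C ev tau1) k = Some (BUNDLE x.1.1 x.1.2 x.2 (sigs_for (saved (ST tau1.+1 p)) x))
    & exists i0 a b, ev tau1 = Recv M i0 a b].
Proof.
rewrite /outsAt /stateAt.
case: (stepP tau1) => [E|[i [m [sn [Ev Hi E]]]]|[i [tau0 [k [mm [Ev Hc Hi E]]]]]]; rewrite E /=.
- by move=> /negP H1 /H1.
- by rewrite /upd; case: eqP => [->|_] /= /negP H1 /H1.
- rewrite nth_rcons size_outs ltnn eqxx /upd; case: eqP => [->|_]; last by move=> /negP H1 /H1.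
  clear E; case: mm Hc => m sn j sigs Hc; set s := (RUN tau1).2 i.
  case Hg: (~~ has (same_slot sn j) (delivered s) && ((j, (m, sn, j)) \in sigs)); last first.
    by rewrite /= Hg => /negP H1 /H1.
  case/andP: Hg => Hnd Hj.
  case: (recv_core t i (s:=s) Hj Hnd) => sv2 [-> Hsub Hdel Hthr] Hn /Hdel [|[Ex Hq]]; first by rewrite (negbTE Hn).
  subst x; case: (Hthr Hq) => _ [kk Hkk]; split => //.
  + have Hj' : (j, (m, sn, j)) \in sigs_for sigs (m, sn, j) by rewrite mem_filter eqxx Hj.
    by move: (Hsub _ Hj'); rewrite mem_filter => /andP[_ ->].
  + by exists kk.
  + by exists i, tau0, k.
Qed.

Lemma run_recv tau i tau0 k mm : ev tau = Recv M i tau0 k ->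
  copy_msg ev (RUN tau).1 tau0 k i = Some mm -> i \in C ->
  ST tau.+1 i = (on_receive t i (ST tau i) mm).1.
Proof.
move=> Ev Hc Hi; rewrite /stateAt run_S; move: Hc.
case: (RUN tau) => outs st /= Hc; rewrite Ev Hc Hi.
by case: on_receive => s' o /=; rewrite /upd eqxx.
Qed.

Lemma receive_B T p x tau1 k tau2 i' : valid_exec t C ev d ->
  (x.2, x) \in saved (ST T p) -> n + t < size (sigs_for (saved (ST T p)) x) * 2 ->
  onth (outsAt t C ev tau1) k = Some (BUNDLE x.1.1 x.1.2 x.2 (sigs_for (saved (ST T p)) x)) ->
  (exists i0 a b, ev tau1 = Recv M i0 a b) ->
  ev tau2 = Recv M i' tau1 k ->
  x \in delivered (ST tau2.+1 i').
Proof.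
move=> Hv Hx Hq Hk [i0 [a [b E1]]] E2.
have Hv' := Hv; case: Hv' => _ _ _ Hrecv _.
case: (Hrecv _ _ _ _ E2) => Hi lt _ _.
have Hc : copy_msg ev (RUN tau2).1 tau1 k i' = Some (BUNDLE x.1.1 x.1.2 x.2 (sigs_for (saved (ST T p)) x)).
  by rewrite /copy_msg size_outs lt E1 nth_outs.
case: (Inv_all tau2 Hv) => I _; case: (I i') => /= _ _ _ _ u5.
case: (Inv_all T Hv) => IT _; case: (IT p) => /= uT _ _ _ _.
move: Hx Hq Hc Hk; case: x => [[m sn] j] Hx Hq Hc Hk.
have MS := mono_step tau2 i'; rewrite (run_recv E2 Hc Hi) in MS *.
case Hd: (has (same_slot sn j) (delivered (ST tau2 i'))).
- case/hasP: Hd => x' Hx' Hs.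
  have Heq := @quorum T tau2 p i' (m, sn, j) x' Hv Hs Hq (u5 _ Hx').
  case: MS => _ _ D; apply: D; by rewrite Heq.
- have Hj : (j, (m, sn, j)) \in sigs_for (saved (ST T p)) (m, sn, j) by rewrite mem_filter eqxx.
  case: (recv_core t i' (s:=ST tau2 i') Hj (negbT Hd)) => sv2 [_ Hsub _ Hthr].
  suff Hth : n + t < size (sigs_for sv2 (m, sn, j)) * 2 by case: (Hthr Hth).
  apply: leq_trans Hq _; rewrite leq_mul2r; apply/orP; right.
  have E : sigs_for (sigs_for (saved (ST T p)) (m, sn, j)) (m, sn, j) = sigs_for (saved (ST T p)) (m, sn, j).
    by rewrite /sigs_for filter_id.
  rewrite -{1}E; apply: uniq_leq_size Hsub.
  by rewrite E; apply: filter_uniq.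
Qed.
Lemma main_aux : valid_exec t C ev d ->
  forall (i j : 'I_n) (m : M) (sn : nat),
    i \in C -> mbrb_delivers t C ev i (m, sn, j) ->
    exists L : {set 'I_n},
      [/\ L \subset C, #|C| - d <= #|L| &
          forall k, k \in L -> mbrb_delivers t C ev k (m, sn, j)].
Proof.
move=> Hv i j m sn Hi [tau Htau].
have Hv' := Hv; case: Hv' => _ _ _ _ Hadv.
case: (first_del Htau) => tau1 [H1 H2].
case: (del_step H1 H2) => _ Hx [k Hk] Hev.
have Hsz : k < size (outsAt t C ev tau1) by rewrite -onthTE Hk.
case: (Hadv tau1 k Hsz) => D [HD Hrec].
have Hq : n + t < size (sigs_for (saved (ST tau1.+1 i)) (m, sn, j)) * 2.
  by case: (Inv_all tau1.+1 Hv) => I _; case: (I i) => /= _ _ _ _; apply.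
exists (C :\: D); split.
- exact: subsetDl.
- rewrite cardsD; have : #|C :&: D| <= #|D| by apply: subset_leq_card; apply: subsetIr.
  move: HD; lia.
- move=> k' /setDP [Hk'C Hk'D]; case: (Hrec k' Hk'C Hk'D) => tau2 E2.
  exists tau2.+1; exact: (receive_B Hv Hx Hq Hk Hev E2).
Qed.

End Pf.

Theorem mainTheorem6 (M : eqType) (n t d : nat) (C : {set 'I_n})
  (ev : nat -> event M n) :
  3 * t + 2 * d < n ->
  valid_exec t C ev d ->
  forall (i j : 'I_n) (m : M) (sn : nat),
    i \in C -> mbrb_delivers t C ev i (m, sn, j) ->
    exists L : {set 'I_n},
      [/\ L \subset C, #|C| - d <= #|L| &
          forall k, k \in L -> mbrb_delivers t C ev k (m, sn, j)].
Proof. by move=> _; apply: main_aux. Qed.
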